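(* For every integer $N\geqslant 2$, the set of all non-empty compact sets in $\mathbb R^N$ that are in general position is a dense $G_\delta$ subset of $\mathcal K(\mathbb R^N)$. Also, the set of all non-empty compact sets in $\ell_2$ that are in general position is a dense $G_\delta$ subset of $\mathcal K(\ell_2)$.
   Context: For a complete metric space $X$, $\mathcal K(X)$ denotes the space of all non-empty compact subsets of $X$ with the Hausdorff metric. $\ell_2$ is the separable real Hilbert space. A subset $M\subset\mathbb R^N$ (resp. $M\subset\ell_2$) is in general position if for every integer $d\leqslant N$ (resp. every integer $d\geqslant 1$) and every $d+1$ pairwise distinct points $A_0,\dots,A_d\in M$, these points are affinely independent, i.e. the affine subspace they generate has dimension $d$. *)

(* Defs.v *)
From HB Require Import structures.
From mathcomp Require Import all_boot all_order all_algebra.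
From mathcomp Require Import all_classical all_reals all_analysis.
Set Implicit Arguments. Unset Strict Implicit. Unset Printing Implicit Defensive.
Import Order.TTheory GRing.Theory Num.Theory.
Import numFieldNormedType.Exports.
Local Open Scope classical_set_scope.
Local Open Scope ring_scope.

Section Defs.
Variable R : realType.

(** ** Generic metric-space notions.
    A metric space is given by a carrier set [S : set T] and a distance
    [d : T -> T -> R] (the values of [d] outside [S] are irrelevant). *)

Definition mconv (T : Type) (d : T -> T -> R) (x : nat -> T) (l : T) : Prop :=
  (fun n => d (x n) l) @ \oo --> (0 : R).

Definition mcompact (T : Type) (S : set T) (d : T -> T -> R) (K : set T) : Prop :=
  K `<=` S /\
  forall x : nat -> T, (forall n, K (x n)) ->
    exists (phi : nat -> nat) (l : T),
      (forall n, (phi n < phi n.+1)%N) /\ K l /\ mconv d (x \o phi) l.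

Definition hyperspace (T : Type) (S : set T) (d : T -> T -> R) : set (set T) :=
  [set K | K !=set0 /\ mcompact S d K].

Definition hausdorff_dist (T : Type) (d : T -> T -> R) (A B : set T) : R :=
  Num.max (sup [set inf [set d a b | b in B] | a in A])
          (sup [set inf [set d a b | a in A] | b in B]).

Definition hopen (T : Type) (S : set T) (d : T -> T -> R) (U : set (set T)) : Prop :=
  U `<=` hyperspace S d /\
  forall A, U A -> exists2 e : R, 0 < e &
    forall B, hyperspace S d B -> hausdorff_dist d A B < e -> U B.

Definition hGdelta (T : Type) (S : set T) (d : T -> T -> R) (G : set (set T)) : Prop :=
  exists U : nat -> set (set T), (forall n, hopen S d (U n)) /\
    G = \bigcap_n U n.

Definition hdense (T : Type) (S : set T) (d : T -> T -> R) (G : set (set T)) : Prop :=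
  forall A, hyperspace S d A -> forall e : R, 0 < e ->
    exists2 B, G B & hausdorff_dist d A B < e.

(** ** Affine independence and general position, for points that are
    real-valued functions on an index set [I] (coordinates); linear
    combinations of finitely many points are taken coordinatewise. *)

Definition affinely_independent (I : Type) (d : nat) (A : 'I_d.+1 -> I -> R) : Prop :=
  forall lam : 'I_d.+1 -> R,
    \sum_(i < d.+1) lam i = 0 ->
    (forall j : I, \sum_(i < d.+1) lam i * A i j = 0) ->
    forall i, lam i = 0.

Definition general_position_wrt (I : Type) (P : nat -> Prop) (M : set (I -> R)) : Prop :=
  forall d : nat, P d -> forall A : 'I_d.+1 -> I -> R,
    (forall i, M (A i)) -> injective A -> affinely_independent A.

Definition euclid_dist (N : nat) (x y : 'I_N -> R) : R :=
  Num.sqrt (\sum_(i < N) (x i - y i) ^+ 2).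

Definition RN (N : nat) : set ('I_N -> R) := setT.

Definition general_position_RN (N : nat) (M : set ('I_N -> R)) : Prop :=
  general_position_wrt (fun d => (d <= N)%N) M.

Definition l2 : set (nat -> R) :=
  [set u : nat -> R | cvgn (series (fun n => u n ^+ 2))].

Definition l2_dist (u v : nat -> R) : R :=
  Num.sqrt (limn (series (fun n => (u n - v n) ^+ 2))).

Definition general_position_l2 (M : set (nat -> R)) : Prop :=
  general_position_wrt (fun d => (1 <= d)%N) M.

End Defs.

(* Main.v *)
Require Import Defs.
From mathcomp Require Import all_boot all_order all_algebra.
From mathcomp Require Import all_classical all_reals all_analysis.
From mathcomp Require Import ring lra.
Set Implicit Arguments. Unset Strict Implicit. Unset Printing Implicit Defensive.
Import Order.TTheory GRing.Theory Num.Theory.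
Import numFieldNormedType.Exports.
Local Open Scope classical_set_scope.
Local Open Scope ring_scope.

Definition incr (f : nat -> nat) := forall n, (f n < f n.+1)%N.

Lemma incr_ge f : incr f -> forall n, (n <= f n)%N.
Proof. by move=> H; elim=> [|n IH] //; apply: leq_ltn_trans IH (H n). Qed.

Lemma incr_lt f : incr f -> forall m n, (m < n)%N -> (f m < f n)%N.
Proof.
move=> H m; elim=> [|n IH] //; rewrite ltnS leq_eqVlt => /orP[/eqP->|/IH h].
  exact: H.
exact: ltn_trans h (H n).
Qed.

Lemma incr_comp f g : incr f -> incr g -> incr (f \o g).
Proof. by move=> Hf Hg n; exact: (incr_lt Hf (Hg n)). Qed.

Lemma incr_id : incr id.
Proof. by []. Qed.

Section Helpers.
Variable R : realType.

Lemma cvg0_ev (u : nat -> R) : u @ \oo --> (0:R) ->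
  forall e : R, 0 < e -> exists N, forall n, (N <= n)%N -> `|u n| < e.
Proof.
move=> /cvgrPdist_lt H e e0; have [N _ HN] := H e e0.
exists N => n Nn; have := HN n Nn; by rewrite sub0r normrN.
Qed.

Lemma ev_cvg0 (u : nat -> R) :
  (forall e : R, 0 < e -> exists N, forall n, (N <= n)%N -> `|u n| < e) ->
  u @ \oo --> (0:R).
Proof.
move=> H; apply/cvgrPdist_lt => e e0; have [N HN] := H e e0.
exists N => // n /= Nn; by rewrite sub0r normrN; apply: HN.
Qed.

Lemma cvg_ev (u : nat -> R) (l : R) : u @ \oo --> l ->
  forall e : R, 0 < e -> exists N, forall n, (N <= n)%N -> `|u n - l| < e.
Proof.
move=> /cvgrPdist_lt H e e0; have [N _ HN] := H e e0.
exists N => n Nn; have := HN n Nn; by rewrite distrC.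
Qed.

Lemma ev_cvg (u : nat -> R) (l : R) :
  (forall e : R, 0 < e -> exists N, forall n, (N <= n)%N -> `|u n - l| < e) ->
  u @ \oo --> l.
Proof.
move=> H; apply/cvgrPdist_lt => e e0; have [N HN] := H e e0.
exists N => // n /= Nn; by rewrite distrC; apply: HN.
Qed.

Lemma sub_cvg (u : nat -> R) (l : R) f : u @ \oo --> l -> incr f -> (u \o f) @ \oo --> l.
Proof.
move=> /cvg_ev H fi; apply: ev_cvg => e e0; have [N HN] := H e e0.
exists N => n Nn /=; apply: HN; exact: leq_trans Nn (incr_ge fi n).
Qed.

Lemma cvg_sumI (m : nat) (u : nat -> 'I_m -> R) (l : 'I_m -> R) :
  (forall i, (fun n => u n i) @ \oo --> l i) ->
  (fun n => \sum_(i < m) u n i) @ \oo --> \sum_(i < m) l i.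
Proof.
move=> H; elim: (index_enum _) => [|i s IH].
  under eq_fun do rewrite big_nil. by rewrite big_nil; apply: cvg_cst.
under eq_fun do rewrite big_cons. rewrite big_cons. exact: cvgD.
Qed.

Lemma cvg_uniq (u : nat -> R) (l l' : R) : u @ \oo --> l -> u @ \oo --> l' -> l = l'.
Proof.
move=> H1 H2; apply/eqP; rewrite -subr_eq0 -normr_le0; apply/ler_addgt0Pr => e e0.
rewrite add0r; have e2 : 0 < e / 2 by rewrite divr_gt0.
have [N1 H1'] := cvg_ev H1 e2; have [N2 H2'] := cvg_ev H2 e2.
have h1 := H1' (maxn N1 N2) (leq_maxl _ _); have h2 := H2' (maxn N1 N2) (leq_maxr _ _).
have h := ler_distD (u (maxn N1 N2)) l l'; have h3 := distrC l (u (maxn N1 N2)).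
have h4 := splitr e; lra.
Qed.

Lemma cvg_cst_eq (u : nat -> R) (l c : R) : u @ \oo --> l -> (forall n, u n = c) -> l = c.
Proof.
move=> H1 Hc; apply: (cvg_uniq H1); apply: ev_cvg => e e0; exists 0%N => n _.
by rewrite Hc subrr normr0.
Qed.

Lemma inv_lt (e : R) : 0 < e -> exists N : nat, (N.+1%:R)^-1 < e.
Proof.
move=> e0; exists (Num.Def.trunc (e^-1)).
rewrite invf_plt ?posrE ?ltr0Sn //; exact: truncnS_gt.
Qed.

Lemma norm3 (x y z w : R) : `|x - y| <= `|z - w| + `|z - x| + `|w - y|.
Proof.
have h1 := ler_distD z x y; have h2 := ler_distD w z y.
have h3 := distrC x z; lra.
Qed.

Lemma finmin (F : finType) (f : F -> R) : (forall x, 0 < f x) ->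
  exists r, 0 < r /\ forall x, r <= f x.
Proof.
move=> fp; suff [r [r0 Hr]] : exists r, 0 < r /\ forall x, x \in enum F -> r <= f x.
  by exists r; split=> // x; apply: Hr; rewrite mem_enum.
elim: (enum F) => [|y s [r [r0 Hr]]]; first by exists 1.
exists (Num.min r (f y)); split; first by rewrite lt_min r0 fp.
move=> x; rewrite in_cons => /orP[/eqP ->|xs]; rewrite ge_min ?lexx ?orbT //.
by rewrite Hr.
Qed.

End Helpers.

Lemma tuple_extract (X : Type) (good : X -> Prop) (Q : (nat -> X) -> X -> Prop) :
  (forall x l f, Q x l -> incr f -> Q (x \o f) l) ->
  (forall x, (forall n, good (x n)) -> exists f l, incr f /\ good l /\ Q (x \o f) l) ->
  forall m (u : nat -> 'I_m -> X), (forall n i, good (u n i)) ->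
  exists f (a : 'I_m -> X), incr f /\ (forall i, good (a i)) /\
    forall i, Q (fun n => u (f n) i) (a i).
Proof.
move=> Qsub base m u gu.
suff : forall s : seq 'I_m, exists f (a : 'I_m -> X), incr f /\ (forall i, good (a i)) /\
    forall i, i \in s -> Q (fun n => u (f n) i) (a i).
  by move=> /(_ (enum 'I_m)) [f [a [fi [ga Ha]]]]; exists f, a; split=> //; split=> // i; apply: Ha; rewrite mem_enum.
elim=> [|i s [f [a [fi [ga Ha]]]]].
  by exists id, (u 0%N); split=> //; split=> //.
have [g [l [gi [gl Hl]]]] := base (fun n => u (f n) i) (fun n => gu _ _).
exists (f \o g), (fun j => if j == i then l else a j); split; first exact: incr_comp.
split; first by move=> j; case: ifP.
move=> j; rewrite in_cons; case: eqP => [-> _|_ /= js]; first exact: Hl.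
exact: (Qsub _ _ _ (Ha j js) gi).
Qed.

Section Metric.
Variables (R : realType) (I : Type) (S : set (I -> R)) (d : (I -> R) -> (I -> R) -> R).
Hypotheses (dge0 : forall x y, S x -> S y -> 0 <= d x y)
 (dxx : forall x, S x -> d x x = 0)
 (dsym : forall x y, S x -> S y -> d x y = d y x)
 (dtri : forall x y z, S x -> S y -> S z -> d x z <= d x y + d y z).

Local Notation T := (I -> R).

Lemma mconv_sub x l f : mconv d x l -> incr f -> mconv d (x \o f) l.
Proof using dge0 dxx dsym dtri. by move=> H fi; exact: (sub_cvg H fi). Qed.

Lemma mconv_ev x l : mconv d x l -> (forall n, S (x n)) -> S l ->
  forall e, 0 < e -> exists N, forall n, (N <= n)%N -> d (x n) l < e.
Proof using dge0 dxx dsym dtri.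
move=> H Sx Sl e e0; have [N HN] := cvg0_ev H e0; exists N => n Nn.
by have := HN n Nn; rewrite ger0_norm //; apply: dge0.
Qed.

Lemma bounded_cpt K p : mcompact S d K -> S p -> exists M, forall b, K b -> d p b <= M.
Proof using dge0 dxx dsym dtri.
move=> [KS cK] Sp; apply: contrapT => nH.
have H : forall n : nat, exists b, K b /\ n%:R < d p b.
  move=> n; apply: contrapT => nb; apply: nH; exists n%:R => b Kb.
  rewrite leNgt; apply/negP => lt; apply: nb; by exists b.
have [b Hb] := choice H.
have [phi [l [phii [Kl cv]]]] := cK b (fun n => (Hb n).1).
have [N HN] := mconv_ev cv (fun n => KS _ (Hb _).1) (KS _ Kl) ltr01.
pose n := maxn N (Num.Def.trunc (d p l)).+2.
have h1 : d (b (phi n)) l < 1 := HN n (leq_maxl _ _).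
have h2 := dtri Sp (KS _ Kl) (KS _ (Hb (phi n)).1).
rewrite (dsym (KS _ Kl) (KS _ (Hb (phi n)).1)) in h2.
have h3 : (phi n)%:R < d p (b (phi n)) := (Hb _).2.
have h4 : d p l + 1 <= n%:R.
  have t := truncnS_gt (d p l).
  have h6 : ((Num.Def.trunc (d p l)).+1 + 1)%:R <= n%:R :> R by rewrite ler_nat addn1 leq_maxr.
  rewrite natrD in h6; lra.
have h5 : n%:R <= (phi n)%:R :> R by rewrite ler_nat; apply: incr_ge.
have : d p (b (phi n)) < d p (b (phi n)).
  apply: (le_lt_trans h2); apply: (lt_le_trans _ (le_trans h4 (le_trans h5 (ltW h3)))).
  by rewrite ltrD2l.
by rewrite ltxx.
Qed.

Lemma haus_pt A B e : hyperspace S d A -> hyperspace S d B ->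
  hausdorff_dist d A B < e -> forall b, B b -> exists a, A a /\ d a b < e.
Proof using dge0 dxx dsym dtri.
move=> [[a0 Aa0] cA] [[b0 Bb0] cB] H b Bb.
have [AS _] := cA; have [BS _] := cB.
set E := [set inf [set d a b' | a in A] | b' in B].
set F := [set d a b | a in A].
have Flb : forall b', B b' -> has_lbound [set d a b' | a in A].
  by move=> b' Bb'; exists 0 => x [a Aa <-]; apply: dge0; [apply: AS|apply: BS].
have [M HM] := bounded_cpt cB (AS _ Aa0).
have Eub : has_ubound E.
  exists M => x [b' Bb' <-]; apply: le_trans (HM _ Bb').
  by apply: (ge_inf (Flb _ Bb')); exists a0.
have h1 : inf F <= sup E by apply: (ub_le_sup Eub); exists b.
have h2 : sup E <= hausdorff_dist d A B by rewrite /hausdorff_dist le_max lexx orbT.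
have e0 : 0 < e - inf F by rewrite subr_gt0; apply: (le_lt_trans h1); apply: le_lt_trans h2 H.
have [x [a Aa <-] xlt] := inf_adherent e0 (conj (ex_intro _ (d a0 b) (ex_intro2 _ _ a0 Aa0 erefl)) (Flb _ Bb)).
by exists a; split=> //; move: xlt; rewrite addrC subrK.
Qed.

Lemma haus_le A B r : A !=set0 -> B !=set0 -> A `<=` S -> B `<=` S ->
  (forall a, A a -> exists b, B b /\ d a b <= r) ->
  (forall b, B b -> exists a, A a /\ d a b <= r) ->
  hausdorff_dist d A B <= r.
Proof using dge0 dxx dsym dtri.
move=> [a0 Aa0] [b0 Bb0] AS BS HA HB.
rewrite /hausdorff_dist ge_max; apply/andP; split; apply: ge_sup.
- by exists (inf [set d a0 b | b in B]); exists a0.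
- move=> x [a Aa <-]; have [b [Bb h]] := HA a Aa; apply: le_trans h.
  apply: ge_inf; last by exists b.
  by exists 0 => y [b' Bb' <-]; apply: dge0; [apply: AS|apply: BS].
- by exists (inf [set d a b0 | a in A]); exists b0.
- move=> x [b Bb <-]; have [a [Aa h]] := HB b Bb; apply: le_trans h.
  apply: ge_inf; last by exists a.
  by exists 0 => y [a' Aa' <-]; apply: dge0; [apply: AS|apply: BS].
Qed.

Lemma finite_cpt m (y : 'I_m -> T) : (forall i, S (y i)) ->
  mcompact S d [set z | exists i, z = y i].
Proof using dge0 dxx dsym dtri.
move=> Sy; split; first by move=> z [i ->].
move=> x Hx; have [k Hk] := choice Hx.
have [i0 [A Ainf HA]] := finite_range_cst_subsequence (@finite_finset _ (range k)).
have [|f [fi _ Af]] := infinite_increasing_seq_wf _ Ainf 0%N.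
  by move=> n; apply: sub_finite_set (finite_II n.+1) => j /=.
exists f, (y i0); split.
  by move/increasing_seqP : fi => fi n; exact: fi n.
split; first by exists i0.
apply: ev_cvg0 => e e0; exists 0%N => n _ /=.
by rewrite Hk ((HA _).1 (Af n)) dxx // normr0.
Qed.

Lemma tb K a0 r : mcompact S d K -> K a0 -> 0 < r ->
  exists m (x : 'I_m -> T), (forall i, K (x i)) /\ forall a, K a -> exists i, d a (x i) < r.
Proof using dge0 dxx dsym dtri.
move=> cK Ka0 r0; apply: contrapT => nH.
have step : forall n (v : nat -> T), (forall i, (i < n)%N -> K (v i)) ->
    exists a, K a /\ forall i, (i < n)%N -> r <= d a (v i).
  move=> n v Kv; apply: contrapT => na; apply: nH; exists n, (fun i : 'I_n => v i).
  split; first by move=> i; apply: Kv.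
  move=> a Ka; apply: contrapT => nb; apply: na; exists a; split=> // i ilt.
  rewrite leNgt; apply/negP => h; apply: nb; by exists (Ordinal ilt).
pose Rel (p q : nat * (nat -> T)) := q.1 = p.1.+1 /\
   (forall i, (i < p.1)%N -> q.2 i = p.2 i) /\
   ((forall i, (i < p.1)%N -> K (p.2 i)) ->
      K (q.2 p.1) /\ forall i, (i < p.1)%N -> r <= d (q.2 p.1) (p.2 i)).
have ex : forall p, {q | Rel p q}.
  move=> [n v]; apply: cid.
  have [Kv|nKv] := pselect (forall i, (i < n)%N -> K (v i)).
    have [a [Ka Ha]] := step n v Kv.
    exists (n.+1, fun i => if (i < n)%N then v i else a); split=> //; split.
      by move=> i /= ->.
    by move=> _ /=; rewrite ltnn; split=> // i ilt; rewrite ilt; apply: Ha.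
  exists (n.+1, v); split=> //; split=> // H; by exfalso.
have [f [f0 fS]] := dependent_choice ex (0%N, fun _ => a0).
have f1 : forall n, (f n).1 = n.
  elim=> [|n IH]; first by rewrite f0.
  by have [-> _] := fS n; rewrite IH.
have fK : forall n i, (i < n)%N -> K ((f n).2 i).
  elim=> [|n IH] i //; rewrite ltnS leq_eqVlt => /orP[/eqP ->|ilt].
    by have [_ [_ H]] := fS n; rewrite -{2}(f1 n); apply: (H _).1; rewrite f1.
  by have [_ [H _]] := fS n; rewrite H ?f1 //; apply: IH.
pose u n := (f n.+1).2 n.
have agree : forall n i, (i < n)%N -> (f n).2 i = u i.
  elim=> [|n IH] i //; rewrite ltnS leq_eqVlt => /orP[/eqP ->|ilt] //.
  by have [_ [H _]] := fS n; rewrite H ?f1 //; apply: IH.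
have far : forall i j, (i < j)%N -> r <= d (u j) (u i).
  move=> i j ij; have [_ [_ H]] := fS j; rewrite f1 in H.
  have [_ H2] := H (fK j); rewrite -(agree j i ij); exact: H2.
have Ku : forall n, K (u n) by move=> n; apply: fK.
have [KS cK'] := cK.
have [phi [l [phii [Kl cv]]]] := cK' u Ku.
have r20 : 0 < r / 2 by rewrite divr_gt0.
have [N HN] := mconv_ev cv (fun n => KS _ (Ku _)) (KS _ Kl) r20.
have h1 := HN N (leqnn N); have h2 := HN N.+1 (leqnSn N).
have h3 := far _ _ (phii N).
have h4 := dtri (KS _ (Ku (phi N.+1))) (KS _ Kl) (KS _ (Ku (phi N))).
rewrite (dsym (KS _ Kl) (KS _ (Ku (phi N)))) in h4.
simpl in h1, h2. lra.
Qed.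

End Metric.

Section Dense.
Variables (R : realType) (I : Type) (S : set (I -> R)) (d : (I -> R) -> (I -> R) -> R)
  (P : nat -> Prop).
Hypotheses (dge0 : forall x y, S x -> S y -> 0 <= d x y)
 (dxx : forall x, S x -> d x x = 0)
 (dsym : forall x y, S x -> S y -> d x y = d y x)
 (dtri : forall x y z, S x -> S y -> S z -> d x z <= d x y + d y z)
 (perturb : forall m (x : 'I_m -> I -> R), (forall i, S (x i)) -> forall δ : R, 0 < δ ->
    exists y : 'I_m -> I -> R, (forall i, S (y i)) /\ (forall i, d (x i) (y i) < δ) /\
      general_position_wrt P [set z | exists i, z = y i]).

Theorem dense_gen : hdense S d [set K | hyperspace S d K /\ general_position_wrt P K].
Proof.
move=> A [[a0 Aa0] cA] e e0.
have [AS _] := cA.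
have e3 : 0 < e / 3 by rewrite divr_gt0.
have [m [x [Ax Hx]]] := tb dge0 dxx dsym dtri cA Aa0 e3.
have [y [Sy [dy gp]]] := perturb (fun i => AS _ (Ax i)) e3.
exists [set z | exists i, z = y i].
  split=> //; split; last exact: (finite_cpt dge0 dxx dsym dtri).
  by have [i _] := Hx a0 Aa0; exists (y i); exists i.
have Hle : hausdorff_dist d A [set z | exists i, z = y i] <= e / 3 + e / 3.
  apply: (@haus_le _ _ S d dge0 dxx dsym dtri).
  - by exists a0.
  - by have [i _] := Hx a0 Aa0; exists (y i); exists i.
  - exact: AS.
  - by move=> z [i ->].
  - move=> a Aa; have [i h] := Hx a Aa; exists (y i); split; first by exists i.
    have := dtri (AS _ Aa) (AS _ (Ax i)) (Sy i); have := dy i; lra.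
  - move=> b [i ->]; exists (x i); split=> //; have := dy i; have := e0; lra.
lra.
Qed.

End Dense.

Section Gdelta.
Variables (R : realType) (I : Type) (S : set (I -> R)) (d : (I -> R) -> (I -> R) -> R)
  (P : nat -> Prop).
Hypotheses (dge0 : forall x y, S x -> S y -> 0 <= d x y)
 (dxx : forall x, S x -> d x x = 0)
 (dsym : forall x y, S x -> S y -> d x y = d y x)
 (dtri : forall x y z, S x -> S y -> S z -> d x z <= d x y + d y z)
 (dcoord : forall x y j, S x -> S y -> `|x j - y j| <= d x y).

Definition sep m (rho : R) (A : 'I_m -> I -> R) :=
  forall i l, i != l -> exists j, rho <= `|A i j - A l j|.

Definition indep m (delta : R) (A : 'I_m -> I -> R) :=
  forall lam : 'I_m -> R, \sum_i lam i = 0 -> \sum_i `|lam i| = 1 ->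
    exists j, delta <= `|\sum_i lam i * A i j|.

Definition V (k dd : nat) : set (set (I -> R)) :=
  [set K | hyperspace S d K /\ (P dd -> exists delta rho, 0 < delta /\ 0 < rho /\
     rho < (k.+1%:R)^-1 /\ forall A : 'I_dd.+1 -> I -> R, (forall i, K (A i)) ->
       sep rho A -> indep delta A)].

Lemma V_open k dd : hopen S d (V k dd).
Proof using dge0 dxx dsym dtri dcoord.
split; first by move=> K [].
move=> K [hK HK].
have [Pd|nPd] := pselect (P dd); last first.
  by exists 1 => // B hB _; split=> // /nPd.
have [delta [rho [delta0 [rho0 [rhok Hind]]]]] := HK Pd.
set r := (k.+1%:R)^-1 in rhok *.
pose rho' := (rho + r) / 2.
pose e := Num.min (delta / 2) ((rho' - rho) / 2).
have rr : rho < rho' by rewrite /rho'; lra.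
have rr' : rho' < r by rewrite /rho'; lra.
have e0 : 0 < e by rewrite lt_min; apply/andP; split; rewrite /rho'; lra.
have e1 : e <= delta / 2 by rewrite ge_min lexx.
have e2 : e <= (rho' - rho) / 2 by rewrite ge_min lexx orbT.
exists e => // B hB hd; split=> // _.
exists (delta / 2), rho'; split; first by rewrite divr_gt0.
split; first exact: lt_trans rho0 rr.
split; first exact: rr'.
move=> A BA sA lam s0 s1.
have [BS _] := hB.2; have [KS _] := hK.2.
have near i : exists a, K a /\ d a (A i) < e by apply: (haus_pt dge0 dxx dsym dtri hK hB hd (BA i)).
have [a Ha] := choice near.
have ca i j : `|a i j - A i j| < e.
  by apply: le_lt_trans (Ha i).2; apply: dcoord; [apply: KS; exact: (Ha i).1|apply: BS].
have sa : sep rho a.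
  move=> i l il; have [j hj] := sA i l il; exists j.
  have := norm3 (A i j) (A l j) (a i j) (a l j); rewrite (distrC (a i j)).
  have := ca i j; have := ca l j; rewrite (distrC (a l j)); lra.
have [j hj] := Hind a (fun i => (Ha i).1) sa lam s0 s1.
exists j.
have eq : \sum_i lam i * A i j = \sum_i lam i * a i j - \sum_i lam i * (a i j - A i j).
  by rewrite -sumrB; apply: eq_bigr => i _; rewrite mulrBr opprB addrC subrK.
have bnd : `|\sum_i lam i * (a i j - A i j)| <= e.
  apply: (le_trans (ler_norm_sum _ _ _)).
  apply: (@le_trans _ _ (\sum_i `|lam i| * e)).
    by apply: ler_sum => i _; rewrite normrM; apply: ler_wpM2l => //; apply/ltW.
  by rewrite -mulr_suml s1 mul1r.
rewrite eq; have := lerB_normD (\sum_i lam i * a i j) (- \sum_i lam i * (a i j - A i j)).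
rewrite normrN; lra.
Qed.

Lemma le_sum_term m (F : 'I_m -> R) i : (forall j, 0 <= F j) -> F i <= \sum_j F j.
Proof. by move=> F0; rewrite (bigD1 i) //= lerDl sumr_ge0. Qed.

Lemma inv_le_nat (n N : nat) : (N <= n)%N -> (n.+1%:R)^-1 <= (N.+1%:R)^-1 :> R.
Proof. by move=> Nn; rewrite lef_pV2 ?posrE ?ltr0Sn // ler_nat. Qed.

Lemma G_sub_V k dd K : hyperspace S d K -> general_position_wrt P K -> V k dd K.
Proof using dge0 dxx dsym dtri dcoord.
move=> hK gK; split=> // Pd.
have [KS cK] := hK.2.
pose r : R := (k.+1%:R)^-1.
have r0 : 0 < r by rewrite invr_gt0 ltr0Sn.
pose rho := r / 2.
have rho0 : 0 < rho by rewrite divr_gt0.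
suff [delta [delta0 Hd]] : exists delta, 0 < delta /\ forall A : 'I_dd.+1 -> I -> R,
    (forall i, K (A i)) -> sep rho A -> indep delta A.
  exists delta, rho; do ! split => //; rewrite /rho -/r; lra.
apply: contrapT => nH.
have H n : exists p : ('I_dd.+1 -> I -> R) * ('I_dd.+1 -> R),
   (forall i, K (p.1 i)) /\ sep rho p.1 /\ \sum_i p.2 i = 0 /\ \sum_i `|p.2 i| = 1 /\
   forall j, `|\sum_i p.2 i * p.1 i j| < (n.+1%:R)^-1.
  apply: contrapT => nn; apply: nH; exists (n.+1%:R)^-1; split; first by rewrite invr_gt0 ltr0Sn.
  move=> A KA sA lam s0 s1; apply: contrapT => nj; apply: nn.
  exists (A, lam); split=> //; split=> //; split=> //; split=> // j.
  by rewrite ltNge; apply/negP => h; apply: nj; exists j.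
have [p Hp] := choice H.
have [f [a [fi [Ka Hf]]]] := @tuple_extract (I -> R) K (fun x l => mconv d x l)
   (fun x l g H gi => mconv_sub dge0 dxx dsym dtri H gi) (fun x Kx => cK x Kx) _ (fun n => (p n).1) (fun n i => (Hp n).1 i).
have base : forall x : nat -> R, (forall n, `|x n| <= 1) ->
    exists phi l, incr phi /\ `|l| <= 1 /\ (x \o phi) @ \oo --> l.
  move=> x xb.
  have [|phi phii cv] := @bolzano_weierstrass R x.
    by exists 1; split=> // M M1 n _; apply: le_trans (xb n) (ltW M1).
  exists phi, (limn (x \o phi)); split; first by move/increasing_seqP : phii.
  split; last exact: cv.
  set l := limn (x \o phi).
  rewrite leNgt; apply/negP => l1.
  have l10 : 0 < `|l| - 1 by rewrite subr_gt0.
  have [N HN] := cvg_ev (cvg_norm cv) l10.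
  have := HN N (leqnn N); have := xb (phi N); rewrite /=.
  move=> h1 h2; have h3 := ler_norm (`|l| - `|x (phi N)|); rewrite distrC in h3.
  lra.
have bnd n i : `|(p (f n)).2 i| <= 1.
  by have [_ [_ [_ [s1 _]]]] := Hp (f n); rewrite -s1; exact: (@le_sum_term _ (fun j => `|(p (f n)).2 j|) i (fun j => normr_ge0 _)).
have [g [c [gi [_ Hg]]]] := @tuple_extract R (fun x => `|x| <= 1) (fun x l => x @ \oo --> l)
   (fun x l h H hi => sub_cvg H hi) base _ (fun n => (p (f n)).2) bnd.
pose h := f \o g.
have hi : incr h := incr_comp fi gi.
have mh i : mconv d (fun n => (p (h n)).1 i) (a i) := mconv_sub dge0 dxx dsym dtri (Hf i) gi.
have ch i j : (fun n => (p (h n)).1 i j) @ \oo --> a i j.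
  apply: ev_cvg => e e0.
  have [N HN] := mconv_ev dge0 dxx dsym dtri (mh i) (fun n => KS _ ((Hp (h n)).1 i)) (KS _ (Ka i)) e0.
  exists N => n Nn; apply: le_lt_trans (HN n Nn); apply: dcoord; apply: KS.
    exact: (Hp (h n)).1 i.
  exact: Ka.
have sc : \sum_i c i = 0.
  apply: (cvg_cst_eq (cvg_sumI (u := fun n i => (p (h n)).2 i) Hg)).
  by move=> n; have [_ [_ [s0 _]]] := Hp (h n).
have sc1 : \sum_i `|c i| = 1.
  apply: (cvg_cst_eq (cvg_sumI (u := fun n i => `|(p (h n)).2 i|) (fun i => cvg_norm (Hg i)))).
  by move=> n; have [_ [_ [_ [s1 _]]]] := Hp (h n).
have cj : forall j, \sum_i c i * a i j = 0.
  move=> j.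
  have cv1 := cvg_sumI (u := fun n i => (p (h n)).2 i * (p (h n)).1 i j) (fun i => cvgM (Hg i) (ch i j)).
  apply: (cvg_uniq (cv1 eventually_filter)); apply: ev_cvg0 => e e0.
  have [N HN] := inv_lt e0; exists N => n Nn.
  have [_ [_ [_ [_ Hj]]]] := Hp (h n); apply: (lt_le_trans (Hj j)).
  apply: le_trans (ltW HN); apply: inv_le_nat; apply: leq_trans Nn (incr_ge hi n).
have ainj : injective a.
  move=> i l eqa; apply: contrapT => nil; have il : i != l by apply/eqP.
  have rho2 : 0 < rho / 2 by rewrite divr_gt0.
  have [N1 H1] := mconv_ev dge0 dxx dsym dtri (mh i) (fun n => KS _ ((Hp (h n)).1 i)) (KS _ (Ka i)) rho2.
  have [N2 H2] := mconv_ev dge0 dxx dsym dtri (mh l) (fun n => KS _ ((Hp (h n)).1 l)) (KS _ (Ka l)) rho2.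
  pose n := maxn N1 N2.
  have [_ [sp _]] := Hp (h n).
  have [j hj] := sp i l il.
  have c1 : `|(p (h n)).1 i j - a i j| < rho / 2.
    apply: le_lt_trans (H1 n (leq_maxl _ _)); apply: dcoord; apply: KS; [exact: (Hp (h n)).1 i|exact: Ka].
  have c2 : `|(p (h n)).1 l j - a l j| < rho / 2.
    apply: le_lt_trans (H2 n (leq_maxr _ _)); apply: dcoord; apply: KS; [exact: (Hp (h n)).1 l|exact: Ka].
  rewrite eqa in c1.
  have := ler_distD (a l j) ((p (h n)).1 i j) ((p (h n)).1 l j).
  rewrite (distrC (a l j)); lra.
have c0 := gK dd Pd a Ka ainj c sc cj.
move: sc1; rewrite big1 => [|i _]; last by rewrite c0 normr0.
by move/eqP; rewrite eq_sym oner_eq0.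
Qed.

Lemma V_sub_G K : hyperspace S d K -> (forall k dd, V k dd K) -> general_position_wrt P K.
Proof.
move=> hK HV dd Pd A KA Ainj lam s0 sA.
have hsep : forall q : 'I_dd.+1 * 'I_dd.+1, exists r : R, 0 < r /\
    (q.1 != q.2 -> exists j, r <= `|A q.1 j - A q.2 j|).
  move=> [i l] /=; case: (eqVneq i l) => [->|il].
    by exists 1; split=> //; rewrite eqxx.
  have : exists j, A i j != A l j.
    apply: contrapT => nj; move/eqP: il; apply; apply: Ainj; apply: funext => j.
    apply/eqP; apply: contrapT => h; apply: nj; exists j; exact/negP.
  move=> [j hj]; exists `|A i j - A l j|; split; first by rewrite normr_gt0 subr_eq0.
  by move=> _; exists j.
have [rr Hrr] := choice hsep.
have [r0 [r00 Hr0]] := finmin (fun q => (Hrr q).1).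
have [k hk] := inv_lt r00.
have [_ HVk] := HV k dd.
have [delta [rho [delta0 [rho0 [rhok Hind]]]]] := HVk Pd.
have sA' : sep rho A.
  move=> i l il; have [j hj] := (Hrr (i, l)).2 il; exists j.
  have h := Hr0 (i, l); apply: le_trans hj; apply: le_trans h; apply/ltW; exact: lt_trans rhok hk.
have ind := Hind A KA sA'.
move=> i; apply: contrapT => nz.
pose s := \sum_i `|lam i|.
have sge0 : 0 <= s by apply: sumr_ge0 => j _.
have spos : 0 < s.
  rewrite lt_def sge0 andbT; apply/eqP => sz; apply: nz.
  by have := @psumr_eq0P _ _ xpredT (fun j => `|lam j|) (fun j _ => normr_ge0 _) sz i isT; move/normr0_eq0.
pose lam' j := lam j / s.
have s0' : \sum_i0 lam' i0 = 0 by rewrite /lam' -mulr_suml s0 mul0r.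
have s1' : \sum_i0 `|lam' i0| = 1.
  have sinv : 0 <= s^-1 by rewrite invr_ge0.
  rewrite /lam'; under eq_bigr do rewrite normrM (ger0_norm sinv).
  by rewrite -mulr_suml divff // gt_eqF.
have [j hj] := ind lam' s0' s1'.
have : \sum_i0 lam' i0 * A i0 j = (\sum_i0 lam i0 * A i0 j) / s.
  by rewrite mulr_suml; apply: eq_bigr => i0 _; rewrite /lam' mulrAC.
by move=> e; rewrite e sA mul0r normr0 in hj; lra.
Qed.

Lemma hyp_open : hopen S d (hyperspace S d).
Proof. by split=> // A _; exists 1 => // B hB _. Qed.

Theorem gdelta_gen : hGdelta S d [set K | hyperspace S d K /\ general_position_wrt P K].
Proof using dge0 dxx dsym dtri dcoord.
pose U n := match (unpickle n : option (nat * nat)) with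
  | Some kd => V kd.1 kd.2 | None => hyperspace S d end.
exists U; split.
  by move=> n; rewrite /U; case: unpickle => [[k dd]|]; [exact: V_open|exact: hyp_open].
apply/seteqP; split.
  move=> K [hK gK] n _; rewrite /U; case: unpickle => [[k dd]|] //.
  exact: G_sub_V.
move=> K HK.
have hK : hyperspace S d K.
  by have := HK 0%N Logic.I; rewrite /U; case: unpickle => [[k dd] []|].
split=> //; apply: V_sub_G => // k dd.
by have := HK (pickle (k, dd)) Logic.I; rewrite /U pickleK.
Qed.

End Gdelta.

Section Core.
Variable R : fieldType.

Lemma vand n (t : 'I_n.+1 -> R) : injective t ->
  forall lam : 'I_n.+1 -> R, (forall p : nat, (p <= n)%N -> \sum_k lam k * t k ^+ p = 0) ->
  forall k, lam k = 0.
Proof.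
move=> tinj lam H k0.
pose r := [seq t (lift k0 l) | l <- enum 'I_n].
pose q := \prod_(z <- r) ('X - z%:P).
have sq : size q = n.+1 by rewrite size_prod_XsubC size_map size_enum_ord.
have e1 : \sum_k lam k * q.[t k] = 0.
  under eq_bigr do rewrite horner_coef mulr_sumr.
  rewrite exchange_big /= big1 // => i _.
  have -> : \sum_k lam k * (q`_i * t k ^+ i) = q`_i * \sum_k lam k * t k ^+ i.
    by rewrite mulr_sumr; apply: eq_bigr => k _; rewrite mulrCA.
  by rewrite H ?mulr0 // -ltnS -sq.
have rt k : k != k0 -> q.[t k] = 0.
  move=> kk0; apply/eqP; rewrite -/(root q (t k)) root_prod_XsubC.
  case: (unliftP k0 k) => [l ->|eqk]; last by rewrite eqk eqxx in kk0.
  by apply/mapP; exists l => //; rewrite mem_enum.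
have nrt : q.[t k0] != 0.
  rewrite -/(root q (t k0)) root_prod_XsubC; apply/mapP => -[l _ /tinj e].
  by have := neq_lift k0 l; rewrite -e eqxx.
move: e1; rewrite (bigD1 k0) //= big1 => [|k kk0]; last by rewrite rt ?mulr0.
by rewrite addr0 => /eqP; rewrite mulf_eq0 (negbTE nrt) orbF => /eqP.
Qed.

End Core.

Section Core2.
Variables (R : realFieldType) (m D : nat) (X : 'I_m -> 'I_D -> R).

Definition sp (i : 'I_m) : R := (i.+1)%:R.

Definition Ymat (dd : 'I_D.+1) (sg : 'I_dd.+1 -> 'I_m) : 'M[R]_dd :=
  \matrix_(k < dd, j < dd) (sp (sg (lift ord0 k)) ^+ j.+1 - sp (sg ord0) ^+ j.+1).

Definition Xmat (dd : 'I_D.+1) (sg : 'I_dd.+1 -> 'I_m) : 'M[R]_dd :=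
  \matrix_(k < dd, j < dd) (X (sg (lift ord0 k)) (widen_ord (ltnSE (ltn_ord dd)) j)
                   - X (sg ord0) (widen_ord (ltnSE (ltn_ord dd)) j)).

Definition Qp (dd : 'I_D.+1) (sg : 'I_dd.+1 -> 'I_m) : {poly R} :=
  \det (map_mx polyC (Ymat sg) + 'X *: map_mx polyC (Xmat sg)).

Lemma Qp_eval dd sg v : (Qp (dd:=dd) sg).[v] = \det (Ymat sg + v *: Xmat sg).
Proof.
rewrite /Qp -horner_evalE -det_map_mx; congr (\det _); apply/matrixP => k j.
by rewrite !mxE /= horner_evalE hornerD hornerC [_ * _%:P]mulrC hornerMX hornerC [v * _]mulrC.
Qed.

Lemma detY (dd : 'I_D.+1) (sg : 'I_dd.+1 -> 'I_m) : injective sg -> \det (Ymat sg) != 0.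
Proof.
move=> sinj; apply/negP => /det0P [w w0 wY].
pose lam (k : 'I_dd.+1) := if unlift ord0 k is Some k' then w 0 k' else - \sum_k' w 0 k'.
have tinj : injective (fun k => sp (sg k)).
  by move=> a b /eqP; rewrite /sp eqr_nat eqSS => /eqP /val_inj /sinj.
have lamL k : lam (lift ord0 k) = w 0 k by rewrite /lam liftK.
have lam0 : lam ord0 = - \sum_k' w 0 k' by rewrite /lam unlift_none.
have H : forall k, lam k = 0.
  apply: (@vand R dd (fun k => sp (sg k)) tinj lam) => p pdd.
  have E q : \sum_(i < dd) lam (lift ord0 i) * sp (sg (lift ord0 i)) ^+ q = \sum_(i < dd) w 0 i * sp (sg (lift ord0 i)) ^+ q.
    by apply: eq_bigr => i _; rewrite lamL.
  rewrite big_ord_recl lam0 E.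
  case: p pdd => [|p] pdd.
    have E0 : \sum_(i < dd) w 0 i * sp (sg (lift ord0 i)) ^+ 0 = \sum_(i < dd) w 0 i by apply: eq_bigr => i _; rewrite expr0 mulr1.
    by rewrite expr0 mulr1 E0 addrC subrr.
  have h := congr1 (fun M : 'rV[R]_dd => M 0 (Ordinal pdd)) wY; rewrite /= !mxE in h; apply: (etrans _ h).
  rewrite mulNr mulr_suml -sumrN -big_split /=; apply: eq_bigr => k _.
  by rewrite mxE mulrBr addrC.
move/eqP: w0; apply; apply/matrixP => i k; rewrite ord1 mxE -lamL; exact: H.
Qed.

Lemma Qp_neq0 (dd : 'I_D.+1) (sg : 'I_dd.+1 -> 'I_m) : injective sg -> Qp sg != 0.
Proof.
move=> sinj; apply/negP => /eqP Q0; have := Qp_eval sg 0.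
by rewrite Q0 horner0 scale0r addr0 => /esym /eqP; apply/negP; apply: detY.
Qed.

Lemma core_pert (U : R) : 0 < U -> exists u, U <= u /\
  forall dd (sg : 'I_dd.+1 -> 'I_m), (dd <= D)%N -> injective sg ->
  forall lam : 'I_dd.+1 -> R, \sum_k lam k = 0 ->
  (forall j : 'I_D, \sum_k lam k * (X (sg k) j + u^-1 * sp (sg k) ^+ j.+1) = 0) ->
  forall k, lam k = 0.
Proof.
move=> U0.
pose P := \prod_(dd < D.+1) \prod_(sg : {ffun 'I_dd.+1 -> 'I_m} | injectiveb sg) Qp sg.
have P0 : P != 0.
  apply/prodf_neq0 => dd _; apply/prodf_neq0 => sg /injectiveP sinj; exact: Qp_neq0.
pose cand := [seq U + n%:R | n <- iota 0 (size P)].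
have : ~~ all (root P) cand.
  apply/negP => allr; have := max_poly_roots P0 allr.
  rewrite map_inj_uniq ?iota_uniq; last by move=> a b /addrI /eqP; rewrite eqr_nat => /eqP.
  by rewrite size_map size_iota ltnn => /(_ isT).
move=> /allPn [u /mapP [n _ ->] nr]; exists (U + n%:R); split; first by rewrite lerDl.
set u' := U + n%:R in nr *.
have u0 : u' != 0 by rewrite gt_eqF // /u'; apply: (lt_le_trans U0); rewrite lerDl.
move=> dd sg Hdd sinj lam s0 Hrel.
have Hdd' : (dd < D.+1)%N by rewrite ltnS.
pose ddo := Ordinal Hdd'.
pose sgf : {ffun 'I_ddo.+1 -> 'I_m} := [ffun k => sg k].
have sgfinj : injective sgf by move=> a b; rewrite !ffunE => /sinj.
have Qn : (Qp sgf).[u'] != 0.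
  apply/negP => /eqP Qz; move: nr; rewrite /root /P horner_prod (bigD1 ddo) //= horner_prod.
  rewrite (bigD1 sgf) /=; last exact/injectiveP.
  by rewrite Qz mul0r mul0r eqxx.
rewrite Qp_eval in Qn.
pose w : 'rV[R]_dd := \row_k lam (lift ord0 k).
have wM : w *m (Ymat sgf + u' *: Xmat sgf) = 0.
  apply/matrixP => i j; rewrite ord1 !mxE.
  pose j' := widen_ord (ltnSE (ltn_ord ddo)) j.
  pose f (k : 'I_dd.+1) := X (sg k) j' + u'^-1 * sp (sg k) ^+ j.+1.
  have h1 := Hrel j'; rewrite big_ord_recl in h1.
  have h2 := s0; rewrite big_ord_recl in h2.
  have e : \sum_k w 0 k * (Ymat sgf + u' *: Xmat sgf) k j =
      u' * (\sum_k lam (lift ord0 k) * f (lift ord0 k)) - u' * (\sum_k lam (lift ord0 k)) * f ord0.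
    rewrite mulr_sumr -mulrA mulr_suml mulr_sumr -sumrB; apply: eq_bigr => k _.
    rewrite !mxE !ffunE /f /=; field => //.
  rewrite e.
  have hS : \sum_k lam (lift ord0 k) * f (lift ord0 k) = - (lam ord0 * f ord0).
    by rewrite /f; lra.
  have hT : \sum_k lam (lift ord0 k) = - lam ord0 by lra.
  rewrite hS hT; ring.
have w0 : w = 0.
  case: (eqVneq w 0) => // wn0; exfalso; move/negP: Qn; apply; apply/det0P; by exists w.
have lamL k : lam (lift ord0 k) = 0.
  by have := congr1 (fun M : 'rV[R]_dd => M 0 k) w0; rewrite !mxE.
move=> k; case: (unliftP ord0 k) => [k' ->|->]; first exact: lamL.
move: s0; rewrite big_ord_recl big1 ?addr0 // => i _; exact: lamL.
Qed.

End Core2.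

Section Euclid.
Variable R : realType.

Lemma sum_term_le n (F : 'I_n -> R) i : (forall j, 0 <= F j) -> F i <= \sum_j F j.
Proof. by move=> F0; rewrite (bigD1 i) //= lerDl sumr_ge0. Qed.

Lemma cs n (a b : 'I_n -> R) :
  (\sum_i a i * b i) ^+ 2 <= (\sum_i a i ^+ 2) * (\sum_i b i ^+ 2).
Proof.
set A := \sum_i a i ^+ 2; set B := \sum_i b i ^+ 2; set C := \sum_i a i * b i.
have A0 : 0 <= A by apply: sumr_ge0 => i _; apply: sqr_ge0.
have E : \sum_i (A * b i - C * a i) ^+ 2 = A * (A * B - C ^+ 2).
  transitivity (\sum_i (A ^+ 2 * b i ^+ 2 - (2 * A * C) * (a i * b i) + C ^+ 2 * a i ^+ 2)).
    by apply: eq_bigr => i _; ring.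
  rewrite big_split big_split /= sumrN -!mulr_sumr -/A -/B -/C; ring.
have H : 0 <= A * (A * B - C ^+ 2) by rewrite -E; apply: sumr_ge0 => i _; apply: sqr_ge0.
case: (eqVneq A 0) => [Az|Anz].
  have a0 i : a i = 0.
    have := @psumr_eq0P _ _ xpredT (fun i => a i ^+ 2) (fun i _ => sqr_ge0 _) Az i isT.
    by move/eqP; rewrite sqrf_eq0 => /eqP.
  rewrite /C big1 ?expr0n /= ?Az ?mul0r // => i _; by rewrite a0 mul0r.
have Ap : 0 < A by rewrite lt_def Anz A0.
by move: H; rewrite pmulr_rge0 // subr_ge0.
Qed.

Lemma mink n (u v : 'I_n -> R) :
  Num.sqrt (\sum_i (u i + v i) ^+ 2) <=
  Num.sqrt (\sum_i u i ^+ 2) + Num.sqrt (\sum_i v i ^+ 2).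
Proof.
set U := \sum_i u i ^+ 2; set V := \sum_i v i ^+ 2; set C := \sum_i u i * v i.
have U0 : 0 <= U by apply: sumr_ge0 => i _; apply: sqr_ge0.
have V0 : 0 <= V by apply: sumr_ge0 => i _; apply: sqr_ge0.
have W : \sum_i (u i + v i) ^+ 2 = U + 2 * C + V.
  transitivity (\sum_i (u i ^+ 2 + 2 * (u i * v i) + v i ^+ 2)).
    by apply: eq_bigr => i _; ring.
  by rewrite big_split big_split /= -mulr_sumr.
have CS : C <= Num.sqrt U * Num.sqrt V.
  rewrite -sqrtrM //; apply: le_trans (ler_norm C) _.
  rewrite -sqrtr_sqr ler_sqrt; last by apply: mulr_ge0.
  exact: cs.
have s0 : 0 <= Num.sqrt U + Num.sqrt V by apply: addr_ge0; apply: sqrtr_ge0.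
rewrite -(ger0_norm s0) -sqrtr_sqr ler_sqrt; last by apply: sqr_ge0.
rewrite W sqrrD !sqr_sqrtr //; lra.
Qed.

Lemma eu_ge0 N (x y : 'I_N -> R) : 0 <= euclid_dist x y.
Proof. exact: sqrtr_ge0. Qed.

Lemma eu_xx N (x : 'I_N -> R) : euclid_dist x x = 0.
Proof. by rewrite /euclid_dist big1 ?sqrtr0 // => i _; rewrite subrr expr0n. Qed.

Lemma eu_sym N (x y : 'I_N -> R) : euclid_dist x y = euclid_dist y x.
Proof. by rewrite /euclid_dist; congr Num.sqrt; apply: eq_bigr => i _; rewrite -sqrrN opprB. Qed.

Lemma eu_tri N (x y z : 'I_N -> R) : euclid_dist x z <= euclid_dist x y + euclid_dist y z.
Proof.
rewrite /euclid_dist; have := mink (fun i => x i - y i) (fun i => y i - z i).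
by under eq_bigr do rewrite addrA subrK.
Qed.

Lemma eu_coord N (x y : 'I_N -> R) j : `|x j - y j| <= euclid_dist x y.
Proof.
rewrite /euclid_dist -sqrtr_sqr ler_sqrt; last by apply: sumr_ge0 => i _; apply: sqr_ge0.
exact: (@sum_term_le _ (fun i => (x i - y i) ^+ 2) j (fun i => sqr_ge0 _)).
Qed.

End Euclid.

Section L2.
Variable R : realType.

Lemma ser_nd (f : nat -> R) : (forall n, 0 <= f n) ->
  {homo series f : n m / (n <= m)%N >-> n <= m}.
Proof. by move=> f0; exact: (@nondecreasing_series R f xpredT 0%N (fun n _ _ => f0 n)). Qed.

Lemma ser_le_lim (f : nat -> R) : (forall n, 0 <= f n) -> cvgn (series f) ->
  forall n, series f n <= limn (series f).
Proof. by move=> f0 cf n; apply: nondecreasing_cvgn_le => //; apply: ser_nd. Qed.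

Lemma ser_ord (f : nat -> R) n : series f n = \sum_(k < n) f k.
Proof. by rewrite seriesEord. Qed.

Lemma l2_cvgB (x y : nat -> R) : l2 x -> l2 y ->
  cvgn (series (fun n => (x n - y n) ^+ 2)).
Proof.
move=> cx cy; apply: nondecreasing_is_cvgn; first by apply: ser_nd => n; apply: sqr_ge0.
exists (2 * limn (series (fun n => x n ^+ 2)) + 2 * limn (series (fun n => y n ^+ 2))).
move=> _ [n _ <-].
have hx := ser_le_lim (fun n => sqr_ge0 (x n)) cx n.
have hy := ser_le_lim (fun n => sqr_ge0 (y n)) cy n.
have : series (fun n => (x n - y n) ^+ 2) n <=
    2 * series (fun n => x n ^+ 2) n + 2 * series (fun n => y n ^+ 2) n.
  rewrite !ser_ord !mulr_sumr -big_split /=; apply: ler_sum => i _.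
  have := sqr_ge0 (x i + y i); lra.
lra.
Qed.

Lemma l2_ge0 (x y : nat -> R) : 0 <= l2_dist x y.
Proof. exact: sqrtr_ge0. Qed.

Lemma l2_xx (x : nat -> R) : l2_dist x x = 0.
Proof.
rewrite /l2_dist (_ : series _ = fun _ => 0); first by rewrite lim_cst ?sqrtr0.
by apply: funext => n; rewrite ser_ord big1 // => i _; rewrite subrr expr0n.
Qed.

Lemma l2_sym (x y : nat -> R) : l2_dist x y = l2_dist y x.
Proof.
rewrite /l2_dist (_ : (fun n => (x n - y n) ^+ 2) = (fun n => (y n - x n) ^+ 2)) //.
by apply: funext => n; rewrite -sqrrN opprB.
Qed.

Lemma l2_coord (x y : nat -> R) j : l2 x -> l2 y -> `|x j - y j| <= l2_dist x y.
Proof.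
move=> cx cy; rewrite /l2_dist -sqrtr_sqr ler_sqrt; last first.
  apply: le_trans (ser_le_lim (fun n => sqr_ge0 _) (l2_cvgB cx cy) 0%N).
  by rewrite ser_ord big_ord0.
apply: le_trans (ser_le_lim (fun n => sqr_ge0 _) (l2_cvgB cx cy) j.+1).
rewrite ser_ord.
exact: (@sum_term_le _ _ (fun i : 'I_j.+1 => (x i - y i) ^+ 2) ord_max (fun i => sqr_ge0 _)).
Qed.

Lemma l2_tri (x y z : nat -> R) : l2 x -> l2 y -> l2 z ->
  l2_dist x z <= l2_dist x y + l2_dist y z.
Proof.
move=> cx cy cz; rewrite /l2_dist.
set a := Num.sqrt (limn (series (fun n => (x n - y n) ^+ 2))).
set b := Num.sqrt (limn (series (fun n => (y n - z n) ^+ 2))).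
have s0 : 0 <= a + b by apply: addr_ge0; apply: sqrtr_ge0.
rewrite -(ger0_norm s0) -sqrtr_sqr ler_sqrt; last by apply: sqr_ge0.
apply: limr_le; first exact: l2_cvgB.
near=> n.
have := mink (fun i : 'I_n => x i - y i) (fun i : 'I_n => y i - z i).
have e1 : \sum_(i < n) (x i - y i + (y i - z i)) ^+ 2 = series (fun n => (x n - z n) ^+ 2) n.
  by rewrite ser_ord; apply: eq_bigr => i _; rewrite addrA subrK.
rewrite e1 -(ser_ord (fun n => (x n - y n) ^+ 2)) -(ser_ord (fun n => (y n - z n) ^+ 2)) => h.
have ha : Num.sqrt (series (fun n => (x n - y n) ^+ 2) n) <= a.
  by rewrite ler_sqrt; [apply: ser_le_lim => //; [move=> k; apply: sqr_ge0|apply: l2_cvgB] |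
    apply: le_trans (ser_le_lim (fun k => sqr_ge0 _) (l2_cvgB cx cy) 0%N); rewrite ser_ord big_ord0].
have hb : Num.sqrt (series (fun n => (y n - z n) ^+ 2) n) <= b.
  by rewrite ler_sqrt; [apply: ser_le_lim => //; [move=> k; apply: sqr_ge0|apply: l2_cvgB] |
    apply: le_trans (ser_le_lim (fun k => sqr_ge0 _) (l2_cvgB cy cz) 0%N); rewrite ser_ord big_ord0].
have S0 : 0 <= series (fun n => (x n - z n) ^+ 2) n.
  by rewrite ser_ord; apply: sumr_ge0 => i _; apply: sqr_ge0.
rewrite -(sqr_sqrtr S0).
have q0 := sqrtr_ge0 (series (fun n => (x n - z n) ^+ 2) n).
have := le_trans h (lerD ha hb) => hh.
by rewrite ler_sqr ?nnegrE //; apply: addr_ge0; apply: sqrtr_ge0.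
Unshelve. all: by end_near.
Qed.

End L2.

Section Pert.
Variable R : realType.

Lemma small_t m (C : 'I_m -> R) (δ : R) : (forall i, 0 <= C i) -> 0 < δ ->
  exists U, 0 < U /\ forall u, U <= u -> forall i, Num.sqrt (u^-1 ^+ 2 * C i) < δ.
Proof.
move=> C0 δ0; pose Ct := \sum_i C i.
have Ct0 : 0 <= Ct by apply: sumr_ge0.
have d2 : 0 < δ ^+ 2 by apply: exprn_gt0.
pose U := Ct / δ ^+ 2 + 1.
have U1 : 1 <= U by rewrite /U lerDr divr_ge0 // ltW.
exists U; split; first exact: lt_le_trans ltr01 U1.
move=> u Uu i.
have u1 : 1 <= u := le_trans U1 Uu.
have u0 : 0 < u := lt_le_trans ltr01 u1.
have t0 : 0 < u^-1 by rewrite invr_gt0.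
have t1 : u^-1 <= 1 by rewrite invr_le1 // unitfE gt_eqF.
rewrite -[X in _ < X](ger0_norm (ltW δ0)) -sqrtr_sqr ltr_sqrt //.
have h1 : u^-1 ^+ 2 * C i <= u^-1 * C i.
  by rewrite expr2 -mulrA; apply: ler_piMl => //; apply: mulr_ge0 => //; apply: ltW.
have h2 : u^-1 * C i <= u^-1 * Ct.
  by apply: ler_wpM2l; [apply: ltW|apply: (@sum_term_le _ _ C i C0)].
have h3 : u^-1 * Ct < δ ^+ 2.
  rewrite mulrC ltr_pdivrMr //.
  have e : δ ^+ 2 * U = Ct + δ ^+ 2 by rewrite /U mulrDr mulr1 mulrCA divff ?mulr1 // gt_eqF.
  apply: (lt_le_trans _ (ler_wpM2l (ltW d2) Uu)); rewrite e; lra.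
lra.
Qed.

Lemma eu_perturb N m (x : 'I_m -> 'I_N -> R) (δ : R) : 0 < δ ->
  exists y : 'I_m -> 'I_N -> R, (forall i, (@RN R N) (y i)) /\
    (forall i, euclid_dist (x i) (y i) < δ) /\
    general_position_wrt (fun d => (d <= N)%N) [set z | exists i, z = y i].
Proof.
move=> δ0.
pose C (i : 'I_m) := \sum_(j < N) (sp R i ^+ j.+1) ^+ 2.
have [U [U0 HU]] := @small_t m C δ (fun i => sumr_ge0 _ (fun j _ => sqr_ge0 _)) δ0.
have [u [Uu Hu]] := core_pert x U0.
exists (fun i j => x i j + u^-1 * sp R i ^+ j.+1); split=> //; split.
  move=> i; rewrite /euclid_dist.
  have -> : \sum_(j < N) (x i j - (x i j + u^-1 * sp R i ^+ j.+1)) ^+ 2 = u^-1 ^+ 2 * C i.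
    rewrite /C mulr_sumr; apply: eq_bigr => j _.
    by rewrite opprD addrA subrr sub0r sqrrN exprMn.
  exact: HU.
move=> dd Pd A Ay Ainj.
have [sg Hsg] := choice Ay.
have sinj : injective sg by move=> a b e; apply: Ainj; rewrite (Hsg a) (Hsg b) e.
move=> lam s0 hA; apply: (Hu dd sg Pd sinj lam s0) => j.
apply: (etrans _ (hA j)); apply: eq_bigr => k _; by rewrite (Hsg k).
Qed.

Lemma ser_fin (w : nat -> R) M : (forall n, (M <= n)%N -> w n = 0) ->
  series w @ \oo --> series w M.
Proof.
move=> w0.
have e k : series w (M + k)%N = series w M.
  elim: k => [|k IH]; first by rewrite addn0.
  by rewrite addnS seriesSr IH w0 ?addr0 // leq_addr.
apply: ev_cvg => ε ε0; exists M => n Mn.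
by rewrite -(subnKC Mn) e subrr normr0.
Qed.

Lemma l2_fin (x y : nat -> R) M : l2 x -> (forall n, (M <= n)%N -> y n = x n) -> l2 y.
Proof.
move=> cx yx; rewrite /l2 /=.
have -> : (fun n => y n ^+ 2) = (fun n => x n ^+ 2) + (fun n => y n ^+ 2 - x n ^+ 2).
  by apply: funext => n /=; rewrite addrC subrK.
rewrite seriesD; apply: is_cvgD => //.
apply/cvg_ex; exists (series (fun n => y n ^+ 2 - x n ^+ 2) M); apply: ser_fin.
by move=> n Mn; rewrite yx // subrr.
Qed.

Lemma l2_perturb m (x : 'I_m -> nat -> R) (δ : R) : (forall i, l2 (x i)) -> 0 < δ ->
  exists y : 'I_m -> nat -> R, (forall i, l2 (y i)) /\
    (forall i, l2_dist (x i) (y i) < δ) /\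
    general_position_wrt (fun d => (1 <= d)%N) [set z | exists i, z = y i].
Proof.
move=> cx δ0.
pose C (i : 'I_m) := \sum_(j < m) (sp R i ^+ j.+1) ^+ 2.
have [U [U0 HU]] := @small_t m C δ (fun i => sumr_ge0 _ (fun j _ => sqr_ge0 _)) δ0.
have [u [Uu Hu]] := core_pert (fun i (j : 'I_m) => x i j) U0.
pose g (i : 'I_m) (n : nat) := if (n < m)%N then sp R i ^+ n.+1 else 0.
exists (fun i n => x i n + u^-1 * g i n); split; [|split].
- move=> i; apply: (l2_fin (M := m) (cx i)) => n mn.
  by rewrite /g ltnNge mn /= mulr0 addr0.
- move=> i; rewrite /l2_dist.
  have H := @ser_fin (fun n => (x i n - (x i n + u^-1 * g i n)) ^+ 2) m.
  rewrite (cvg_lim (@Rhausdorff R) (H _)); last first.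
    by move=> n mn; rewrite /g ltnNge mn /= mulr0 addr0 subrr expr0n.
  rewrite ser_ord.
  have -> : \sum_(k < m) (x i k - (x i k + u^-1 * g i k)) ^+ 2 = u^-1 ^+ 2 * C i.
    rewrite /C mulr_sumr; apply: eq_bigr => j _.
    by rewrite /g ltn_ord opprD addrA subrr sub0r sqrrN exprMn.
  exact: HU.
move=> dd Pd A Ay Ainj.
have [sg Hsg] := choice Ay.
have sinj : injective sg by move=> a b e; apply: Ainj; rewrite (Hsg a) (Hsg b) e.
have ddm : (dd <= m)%N.
  by have := @leq_card _ _ sg sinj; rewrite !card_ord => /ltnW.
move=> lam s0 hA; apply: (Hu dd sg ddm sinj lam s0) => j.
apply: (etrans _ (hA j)); apply: eq_bigr => k _; by rewrite (Hsg k) /g ltn_ord.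
Qed.

End Pert.


Unset Implicit Arguments.
Set Strict Implicit.

Theorem proposition1 (R : realType) :
  (forall N : nat, (2 <= N)%N ->
     let G := [set K | hyperspace (@RN R N) (@euclid_dist R N) K /\
                       general_position_RN K] in
     hdense (@RN R N) (@euclid_dist R N) G /\
     hGdelta (@RN R N) (@euclid_dist R N) G) /\
  (let G := [set K | hyperspace (@l2 R) (@l2_dist R) K /\
                     general_position_l2 K] in
   hdense (@l2 R) (@l2_dist R) G /\ hGdelta (@l2 R) (@l2_dist R) G).
Proof.
split.
  move=> N _; split.
    exact: (@dense_gen R 'I_N (@RN R N) (@euclid_dist R N) (fun d => (d <= N)%N)
      (fun x y _ _ => eu_ge0 x y) (fun x _ => eu_xx x) (fun x y _ _ => eu_sym x y)
      (fun x y z _ _ _ => eu_tri x y z) (fun m x _ δ δ0 => eu_perturb x δ0)).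
  exact: (@gdelta_gen R 'I_N (@RN R N) (@euclid_dist R N) (fun d => (d <= N)%N)
      (fun x y _ _ => eu_ge0 x y) (fun x _ => eu_xx x) (fun x y _ _ => eu_sym x y)
      (fun x y z _ _ _ => eu_tri x y z) (fun x y j _ _ => eu_coord x y j)).
split.
  exact: (@dense_gen R nat (@l2 R) (@l2_dist R) (fun d => (1 <= d)%N)
      (fun x y _ _ => l2_ge0 x y) (fun x _ => l2_xx x) (fun x y _ _ => l2_sym x y)
      (fun x y z cx cy cz => l2_tri cx cy cz) (fun m x cx δ δ0 => l2_perturb cx δ0)).
exact: (@gdelta_gen R nat (@l2 R) (@l2_dist R) (fun d => (1 <= d)%N)
      (fun x y _ _ => l2_ge0 x y) (fun x _ => l2_xx x) (fun x y _ _ => l2_sym x y)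
      (fun x y z cx cy cz => l2_tri cx cy cz) (fun x y j cx cy => l2_coord j cx cy)).
Qed.
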